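(* Let $\mathcal H=(M,n,\mathcal R)$ be a BMS, $x_0\in\mathbb R^n$ and $\gamma>0$. There exists an $\mathcal H$-closed convex polytope $P$ with $x_0\in P\subseteq \{y\in\mathbb R^n:\|y-x_0\|\le\gamma\}$ if and only if for every vector $v\in\mathbb R^n$ there is a mode $m\in M$ such that $v\cdot r\ge 0$ for all $r\in\mathcal R(m)$.
   Context: A multi-mode system is a tuple $\mathcal H=(M,n,\mathcal R)$ with $M$ a finite nonempty set of modes, $n\ge1$ variables, and $\mathcal R:M\to 2^{\mathbb R^n}$ giving nonempty rate sets; it is a BMS if each $\mathcal R(m)$ is a bounded convex polytope. A convex polytope $P\subseteq\mathbb R^n$ is $\mathcal H$-closed if for every vertex $c$ of $P$ there exist a mode $m\in M$ and $\tau>0$ such that $c+t\,r\in P$ for all $r\in\mathcal R(m)$ and all $t\in[0,\tau]$. $\|\cdot\|$ is the Euclidean norm and $\cdot$ the standard dot product. *)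

(* Defs.v *)
From mathcomp Require Import all_boot.
From Stdlib Require Import Reals.
Set Implicit Arguments. Unset Strict Implicit. Unset Printing Implicit Defensive.

Local Open Scope R_scope.

Definition vec (n : nat) := 'I_n -> R.

Definition vadd n (x y : vec n) : vec n := fun i => x i + y i.
Definition vscale n (t : R) (x : vec n) : vec n := fun i => t * x i.
Definition vsub n (x y : vec n) : vec n := fun i => x i - y i.

Definition dot n (x y : vec n) : R := \big[Rplus/0]_(i < n) (x i * y i).
Definition norm n (x : vec n) : R := sqrt (dot x x).

Definition convex_polytope n (P : vec n -> Prop) : Prop :=
  exists H : seq (vec n * R),
    forall x, P x <-> (forall h, List.In h H -> dot h.1 x <= h.2).

Definition bounded n (P : vec n -> Prop) : Prop :=
  exists rho : R, forall x, P x -> norm x <= rho.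

Definition vertex n (P : vec n -> Prop) (c : vec n) : Prop :=
  P c /\
  forall a b (t : R), P a -> P b -> 0 < t < 1 ->
    c = vadd (vscale (1 - t) a) (vscale t b) -> a = c /\ b = c.

Definition BMS (M : finType) (n : nat) (Rset : M -> vec n -> Prop) : Prop :=
  inhabited M /\ (1 <= n)%nat /\
  forall m, (exists r, Rset m r) /\ convex_polytope (Rset m) /\ bounded (Rset m).

Definition H_closed (M : finType) (n : nat) (Rset : M -> vec n -> Prop)
  (P : vec n -> Prop) : Prop :=
  forall c, vertex P c ->
    exists (m : M) (tau : R), 0 < tau /\
      forall r t, Rset m r -> 0 <= t <= tau -> P (vadd c (vscale t r)).

(* Main.v *)
From HB Require Import structures.
Require Import Defs.
From mathcomp Require Import all_boot.
From Stdlib Require Import Reals Lra Lia ClassicalEpsilon Classical FunctionalExtensionality.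
From Stdlib Require List.
Local Open Scope R_scope.

Lemma RplusA' : associative Rplus. Proof. by move=> *; rewrite Rplus_assoc. Qed.
Lemma RmultDl' : left_distributive Rmult Rplus. Proof. by move=> *; rewrite Rmult_plus_distr_r. Qed.
Lemma RmultDr' : right_distributive Rmult Rplus. Proof. by move=> *; rewrite Rmult_plus_distr_l. Qed.
HB.instance Definition _ := Monoid.isComLaw.Build R 0 Rplus RplusA' Rplus_comm Rplus_0_l.
HB.instance Definition _ := Monoid.isMulLaw.Build R 0 Rmult Rmult_0_l Rmult_0_r.
HB.instance Definition _ := Monoid.isAddLaw.Build R Rmult Rplus RmultDl' RmultDr'.

Lemma sumD (I : finType) (f g : I -> R) :
  \big[Rplus/0]_(i : I) (f i + g i) = \big[Rplus/0]_(i : I) f i + \big[Rplus/0]_(i : I) g i.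
Proof. by rewrite big_split. Qed.

Lemma sumZ (I : finType) c (f : I -> R) :
  \big[Rplus/0]_(i : I) (c * f i) = c * \big[Rplus/0]_(i : I) f i.
Proof. by rewrite big_distrr. Qed.

Set Implicit Arguments. Unset Strict Implicit.

Lemma sum_le (I : finType) (f g : I -> R) :
  (forall i, f i <= g i) -> \big[Rplus/0]_(i : I) f i <= \big[Rplus/0]_(i : I) g i.
Proof. move=> H; apply: (big_ind2 (fun a b => a <= b)) => //; [lra| move=> *; lra]. Qed.

Lemma sum_ge0 (I : finType) (f : I -> R) :
  (forall i, 0 <= f i) -> 0 <= \big[Rplus/0]_(i : I) f i.
Proof. move=> H; apply: (big_ind (fun a => 0 <= a)) => //; [lra| move=> *; lra]. Qed.

Lemma sum_ext (I : finType) (f g : I -> R) :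
  (forall i, f i = g i) -> \big[Rplus/0]_(i : I) f i = \big[Rplus/0]_(i : I) g i.
Proof. by move=> H; apply: eq_bigr => i _. Qed.

Lemma sum_term_le (I : finType) (f : I -> R) j :
  (forall i, 0 <= f i) -> f j <= \big[Rplus/0]_(i : I) f i.
Proof.
move=> H; rewrite (bigD1 j) //=.
have : 0 <= \big[Rplus/0]_(i | i != j) f i.
  apply: (big_ind (fun a => 0 <= a)) => //; [lra| move=> *; lra].
lra.
Qed.

Lemma sum_indicator N k c : (k < N)%nat ->
  \big[Rplus/0]_(j < N) (if (j : nat) == k then c else 0) = c.
Proof.
move=> Hk; rewrite (bigD1 (Ordinal Hk)) //= eqxx big1 ?Rplus_0_r //.
by move=> j Hj; case: eqP => // Hjk; exfalso; move/negP: Hj; apply; apply/eqP; apply: val_inj.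
Qed.

Lemma sum_exchange N (I : finType) (F : nat -> I -> R) :
  \big[Rplus/0]_(j < N) \big[Rplus/0]_(i : I) F j i =
  \big[Rplus/0]_(i : I) \big[Rplus/0]_(j < N) F j i.
Proof. by rewrite exchange_big. Qed.

Lemma dot_lin n a b (x y z : vec n) :
  dot (fun i => a * x i + b * y i) z = a * dot x z + b * dot y z.
Proof.
rewrite /dot -!sumZ -sumD; apply: sum_ext => i; ring.
Qed.

Lemma dot_comm n (x y : vec n) : dot x y = dot y x.
Proof. rewrite /dot; apply: sum_ext => i; ring. Qed.

Lemma dot_linr n a b (x y z : vec n) :
  dot z (fun i => a * x i + b * y i) = a * dot z x + b * dot z y.
Proof. by rewrite dot_comm dot_lin (dot_comm x) (dot_comm y). Qed.

Lemma dot_ge0 n (x : vec n) : 0 <= dot x x.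
Proof. apply: sum_ge0 => i; nra. Qed.

Lemma coord_le_dot n (x : vec n) i : x i * x i <= dot x x.
Proof. rewrite /dot; exact: (@sum_term_le _ (fun i => x i * x i) i (fun j => ltac:(nra))). Qed.

Lemma coord_le_norm n (x : vec n) i : Rabs (x i) <= norm x.
Proof.
rewrite /norm -(sqrt_Rsqr (Rabs (x i))); last exact: Rabs_pos.
apply: sqrt_le_1_alt; rewrite -Rsqr_abs /Rsqr; exact: coord_le_dot.
Qed.

Lemma dot_eq0 n (x : vec n) : dot x x = 0 -> x = (fun _ => 0).
Proof.
move=> H; apply: functional_extensionality => i.
have := coord_le_dot x i; rewrite H => h; nra.
Qed.

Lemma dot_unit n (i : 'I_n) (x : vec n) :
  dot (fun k => if k == i then 1 else 0) x = x i.
Proof.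
rewrite /dot (bigD1 i) //= eqxx big1 ?Rplus_0_r; first ring.
by move=> j /negbTE ->; ring.
Qed.

Lemma dot_sum n N (a : vec n) (w : nat -> R) (g : nat -> vec n) :
  dot a (fun i => \big[Rplus/0]_(j < N) (w j * g j i)) =
  \big[Rplus/0]_(j < N) (w j * dot a (g j)).
Proof.
rewrite /dot.
transitivity (\big[Rplus/0]_(i < n) \big[Rplus/0]_(j < N) (w j * (a i * g j i))).
  by apply: sum_ext => i; rewrite -sumZ; apply: sum_ext => j; ring.
rewrite exchange_big; apply: sum_ext => j; rewrite -sumZ; apply: sum_ext => i; ring.
Qed.

Lemma dot0 n (x : vec n) : dot (fun _ => 0) x = 0.
Proof. rewrite /dot big1 //= => i _; ring. Qed.


Record cstr (n : nat) := Cstr { ca : vec n; cc : nat -> R; cb : R }.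

Definition lhs n k (s : cstr n) (x : vec n) (l : nat -> R) :=
  dot (ca s) x + \big[Rplus/0]_(j < k) (cc s j * l j).

Definition sat n k (S : list (cstr n)) x l := forall s, List.In s S -> lhs k s x l <= cb s.

Lemma lhs_succ n k (s : cstr n) x l : lhs k.+1 s x l = lhs k s x l + cc s k * l k.
Proof. by rewrite /lhs big_ord_recr /=; ring. Qed.

Definition isz n k (s : cstr n) : bool := if Req_EM_T (cc s k) 0 then true else false.
Definition ispos n k (s : cstr n) : bool := if Rlt_dec 0 (cc s k) then true else false.
Definition isneg n k (s : cstr n) : bool := if Rlt_dec (cc s k) 0 then true else false.

Definition comb n k (p q : cstr n) : cstr n :=
  Cstr (fun i => (- cc q k) * ca p i + cc p k * ca q i)
       (fun j => (- cc q k) * cc p j + cc p k * cc q j)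
       ((- cc q k) * cb p + cc p k * cb q).

Definition FMstep n k (S : list (cstr n)) : list (cstr n) :=
  List.filter (isz k) S ++
  List.flat_map (fun p => List.map (fun q => comb k p q) (List.filter (isneg k) S))
                (List.filter (ispos k) S).

Lemma lhs_comb n k (p q : cstr n) x l :
  lhs k (comb k p q) x l = (- cc q k) * lhs k p x l + cc p k * lhs k q x l.
Proof.
rewrite /lhs /comb /= dot_lin.
have -> : \big[Rplus/0]_(j < k) (((- cc q k) * cc p j + cc p k * cc q j) * l j) =
  (- cc q k) * \big[Rplus/0]_(j < k) (cc p j * l j) + cc p k * \big[Rplus/0]_(j < k) (cc q j * l j).
  rewrite -!sumZ -sumD; apply: sum_ext => j; ring.
set A := \big[Rplus/0]_(j < k) (cc p j * l j). set B := \big[Rplus/0]_(j < k) (cc q j * l j). ring.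
Qed.

Lemma In_FMstep n k (S : list (cstr n)) s :
  List.In s (FMstep k S) <->
  (List.In s S /\ cc s k = 0) \/
  exists p q, List.In p S /\ 0 < cc p k /\ List.In q S /\ cc q k < 0 /\ s = comb k p q.
Proof.
rewrite /FMstep List.in_app_iff List.filter_In List.in_flat_map.
split.
- case=> [[H1 H2]|[p [Hp Hs]]].
    by left; split => //; move: H2; rewrite /isz; case: Req_EM_T.
  right; move: Hp Hs; rewrite List.filter_In List.in_map_iff => -[Hp Hp'] [q [Hq0 Hq1]].
  move: Hq1; rewrite List.filter_In => -[Hq Hq'].
  exists p, q; split => //; split; first by move: Hp'; rewrite /ispos; case: Rlt_dec.
  split => //; split; first by move: Hq'; rewrite /isneg; case: Rlt_dec.
  by rewrite Hq0.
- case=> [[H1 H2]|[p [q [Hp [Hp' [Hq [Hq' ->]]]]]]].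
    by left; split => //; rewrite /isz; case: Req_EM_T.
  right; exists p; split.
    by rewrite List.filter_In /ispos; split => //; case: Rlt_dec.
  rewrite List.in_map_iff; exists q; split => //.
  by rewrite List.filter_In /isneg; split => //; case: Rlt_dec.
Qed.

Fixpoint maxl (d : R) (s : list R) := match s with nil => d | a :: t => Rmax a (maxl d t) end.
Fixpoint minl (d : R) (s : list R) := match s with nil => d | a :: t => Rmin a (minl d t) end.

Lemma maxl_ge d s : d <= maxl d s /\ forall a, List.In a s -> a <= maxl d s.
Proof.
elim: s => [|a t [IH1 IH2]] /=; first by split => //; lra.
split; first by apply: Rle_trans (Rmax_r _ _).
move=> b [<-|Hb]; first exact: Rmax_l.
by apply: Rle_trans (Rmax_r _ _); apply: IH2.
Qed.

Lemma maxl_in d s : maxl d s = d \/ List.In (maxl d s) s.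
Proof.
elim: s => [|a t IH] /=; first by left.
rewrite /Rmax; case: Rle_dec => _; last by right; left.
by case: IH => [->|H]; [left | right; right].
Qed.

Lemma minl_le d s : minl d s <= d /\ forall a, List.In a s -> minl d s <= a.
Proof.
elim: s => [|a t [IH1 IH2]] /=; first by split => //; lra.
split; first by apply: Rle_trans (Rmin_r _ _) _.
move=> b [<-|Hb]; first exact: Rmin_l.
by apply: Rle_trans (Rmin_r _ _) _; apply: IH2.
Qed.

Lemma minl_in d s : minl d s = d \/ List.In (minl d s) s.
Proof.
elim: s => [|a t IH] /=; first by left.
rewrite /Rmin; case: Rle_dec => _; first by right; left.
by case: IH => [->|H]; [left | right; right].
Qed.

Definition bnd n k (s : cstr n) x l := (cb s - lhs k s x l) / cc s k.

Lemma FMstep_correct n k (S : list (cstr n)) x :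
  (exists l, sat k.+1 S x l) <-> (exists l, sat k (FMstep k S) x l).
Proof.
split.
- move=> [l Hl]; exists l => s /In_FMstep [[Hs Hz]|[p [q [Hp [Hp' [Hq [Hq' ->]]]]]]].
    by have := Hl s Hs; rewrite lhs_succ Hz; lra.
  rewrite lhs_comb /comb /=.
  have := Hl p Hp; have := Hl q Hq; rewrite !lhs_succ => h1 h2.
  set Lp := lhs k p x l in h2 *; set Lq := lhs k q x l in h1 *.
  set cp := cc p k in Hp' h2 *; set cq := cc q k in Hq' h1 *.
  have e : - cq * Lp + cp * Lq = - cq * (Lp + cp * l k) + cp * (Lq + cq * l k) by ring.
  rewrite e; apply: Rplus_le_compat; apply: Rmult_le_compat_l; lra.
- move=> [l Hl].
  set Us := List.map (fun s => bnd k s x l) (List.filter (ispos k) S).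
  set Ls := List.map (fun s => bnd k s x l) (List.filter (isneg k) S).
  set d := minl 0 Us.
  set lam := maxl d Ls.
  have HU : forall p, List.In p S -> 0 < cc p k -> lam <= bnd k p x l.
    move=> p Hp Hp'.
    have pU : List.In (bnd k p x l) Us.
      apply: List.in_map; rewrite List.filter_In /ispos; split => //; by case: Rlt_dec.
    case: (maxl_in d Ls) => E; rewrite -/lam in E.
      by rewrite E; case: (minl_le 0 Us) => _ /(_ _ pU).
    move: E; rewrite /Ls List.in_map_iff => -[q [<- ]]; rewrite List.filter_In /isneg => -[Hq].
    case: Rlt_dec => // Hq' _.
    have := Hl (comb k p q); rewrite lhs_comb /comb /= => /(_ (proj2 (In_FMstep _ _ _) _)).
    move=> /(_ (or_intror (ex_intro _ p (ex_intro _ q (conj Hp (conj Hp' (conj Hq (conj Hq' erefl)))))))).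
    rewrite /bnd => h.
    set Lp := lhs k p x l in h *; set Lq := lhs k q x l in h *.
    set cp := cc p k in Hp' h *; set cq := cc q k in Hq' h *.
    apply: (Rmult_le_reg_r (cp * (- cq))); first nra.
    have e1 : (cb q - Lq) / cq * (cp * - cq) = - (cb q - Lq) * cp by field; lra.
    have e2 : (cb p - Lp) / cp * (cp * - cq) = (cb p - Lp) * (- cq) by field; lra.
    rewrite e1 e2; nra.
  have HL : forall q, List.In q S -> cc q k < 0 -> bnd k q x l <= lam.
    move=> q Hq Hq'; case: (maxl_ge d Ls) => _; apply; apply: List.in_map.
    by rewrite List.filter_In /isneg; split => //; case: Rlt_dec.
  exists (fun j => if j == k then lam else l j) => s Hs.
  rewrite lhs_succ eqxx.
  have -> : lhs k s x (fun j => if j == k then lam else l j) = lhs k s x l.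
    rewrite /lhs; congr (_ + _); apply: sum_ext => j.
    by rewrite (_ : (j : nat) == k = false) // ltn_eqF.
  case: (Rtotal_order (cc s k) 0) => [Hn|[Hz|Hp]].
  + have := HL s Hs Hn; rewrite /bnd => h.
    have : (cb s - lhs k s x l) / cc s k * cc s k >= lam * cc s k by nra.
    have -> : (cb s - lhs k s x l) / cc s k * cc s k = cb s - lhs k s x l by field; lra.
    lra.
  + rewrite Hz; have := Hl s; rewrite In_FMstep => /(_ (or_introl (conj Hs Hz))); lra.
  + have := HU s Hs Hp; rewrite /bnd => h.
    have : lam * cc s k <= (cb s - lhs k s x l) / cc s k * cc s k by nra.
    have -> : (cb s - lhs k s x l) / cc s k * cc s k = cb s - lhs k s x l by field; lra.
    lra.
Qed.

Fixpoint FMall n k (S : list (cstr n)) : list (cstr n) :=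
  match k with 0 => S | k'.+1 => FMall k' (FMstep k' S) end.

Lemma FMall_correct n k (S : list (cstr n)) x :
  (exists l, sat k S x l) <-> (forall s, List.In s (FMall k S) -> dot (ca s) x <= cb s).
Proof.
elim: k S => [|k IH] S /=.
  split; first by move=> [l Hl] s /Hl; rewrite /lhs big_ord0 Rplus_0_r.
  by move=> H; exists (fun _ => 0) => s /H; rewrite /lhs big_ord0 Rplus_0_r.
by rewrite FMstep_correct IH.
Qed.


Definition v0 n : vec n := fun _ => 0.
Arguments v0 : clear implicits.

Definition polyH n (H : seq (vec n * R)) (x : vec n) :=
  forall h, List.In h H -> dot h.1 x <= h.2.

Definition activeb n (x : vec n) (h : vec n * R) : bool :=
  if Req_EM_T (dot h.1 x) h.2 then true else false.

Lemma activebP n (x : vec n) h : activeb x h = true <-> dot h.1 x = h.2.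
Proof. by rewrite /activeb; case: Req_EM_T. Qed.

Definition basic n (H : seq (vec n * R)) x :=
  polyH H x /\ forall d : vec n, (forall h, List.In h H -> dot h.1 x = h.2 -> dot h.1 d = 0) -> d = v0 n.

Fixpoint subs (A : Type) (s : list A) : list (list A) :=
  match s with nil => [:: nil] | a :: t => List.map (cons a) (subs t) ++ subs t end.

Lemma filter_in_subs (A : Type) (f : A -> bool) s : List.In (List.filter f s) (subs s).
Proof.
elim: s => [|a t IH] /=; first by left.
rewrite List.in_app_iff; case: (f a); [left; exact: List.in_map | by right].
Qed.

Lemma dot_addsc n (a x d : vec n) t : dot a (fun i => x i + t * d i) = dot a x + t * dot a d.
Proof.
rewrite (_ : dot a x + t * dot a d = 1 * dot a x + t * dot a d); last ring.
rewrite -(dot_linr 1 t x d a); congr dot; apply: functional_extensionality => i; ring.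
Qed.

Lemma dot_sub n (a x y : vec n) : dot a (fun i => x i - y i) = dot a x - dot a y.
Proof.
have := dot_linr 1 (-1) x y a; rewrite (_ : (fun i => 1 * x i + -1 * y i) = (fun i => x i - y i)).
  by move=> ->; ring.
by apply: functional_extensionality => i; ring.
Qed.

Lemma basic_unique n (H : seq (vec n * R)) x y : basic H x -> basic H y ->
  List.filter (activeb x) H = List.filter (activeb y) H -> x = y.
Proof.
move=> [Px Bx] [Py By] E.
have := Bx (fun i => x i - y i).
have Hd : forall h, List.In h H -> dot h.1 x = h.2 -> dot h.1 (fun i => x i - y i) = 0.
  move=> h hH ha.
  have : List.In h (List.filter (activeb x) H) by rewrite List.filter_In activebP.
  rewrite E List.filter_In activebP => -[_ hb].
  by rewrite dot_sub ha hb; ring.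
move=> /(_ Hd) e; apply: functional_extensionality => i.
have := f_equal (fun f => f i) e; rewrite /v0 /=; lra.
Qed.

Lemma basic_list n (H : seq (vec n * R)) : exists V : list (vec n),
  (forall x, basic H x -> List.In x V) /\ (forall y, List.In y V -> basic H y).
Proof.
pose pick (L : list (vec n * R)) : list (vec n) :=
  match excluded_middle_informative (exists y, basic H y /\ List.filter (activeb y) H = L) with
  | left e => [:: proj1_sig (constructive_indefinite_description _ e)]
  | right _ => nil end.
exists (List.flat_map pick (subs H)); split.
- move=> x Bx; rewrite List.in_flat_map; exists (List.filter (activeb x) H).
  split; first exact: filter_in_subs.
  rewrite /pick; case: excluded_middle_informative => [e|ne]; last first.
    by exfalso; apply: ne; exists x.
  case: constructive_indefinite_description => y [By Ey] /=; left.
  exact: (basic_unique By Bx Ey).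
- move=> y; rewrite List.in_flat_map => -[L [_]]; rewrite /pick.
  case: excluded_middle_informative => // e.
  by case: constructive_indefinite_description => z [Bz _] /= [<-|].
Qed.

Definition lincomb n (G : list (vec n)) (w : nat -> R) : vec n :=
  fun i => \big[Rplus/0]_(j < length G) (w j * List.nth j G (v0 n) i).

Definition inconvP n (G : list (vec n)) (Q : vec n -> Prop) (x : vec n) :=
  exists w : nat -> R, (forall j, 0 <= w j) /\ (forall j, w j <> 0 -> Q (List.nth j G (v0 n))) /\
    \big[Rplus/0]_(j < length G) w j = 1 /\ x = lincomb G w.

Lemma inconvP_pt n (G : list (vec n)) (Q : vec n -> Prop) x :
  List.In x G -> Q x -> inconvP G Q x.
Proof.
move=> /(List.In_nth _ _ (v0 n)) [k [Hk Ek]] Qx.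
have Hk' : (k < length G)%nat by apply/ltP.
exists (fun j => if j == k then 1 else 0); split; first by move=> j; case: eqP; lra.
split; first by move=> j; case: eqP => [->|]; [rewrite Ek|] => //.
split; first exact: sum_indicator.
rewrite /lincomb; apply: functional_extensionality => i.
rewrite -(sum_indicator (x i) Hk'); apply: sum_ext => j.
by case: eqP => [->|_]; [rewrite Ek; ring | ring].
Qed.

Lemma inconvP_comb n (G : list (vec n)) (Q : vec n -> Prop) a b s :
  inconvP G Q a -> inconvP G Q b -> 0 <= s <= 1 ->
  inconvP G Q (fun i => (1 - s) * a i + s * b i).
Proof.
move=> [wa [Ha1 [Ha2 [Ha3 ->]]]] [wb [Hb1 [Hb2 [Hb3 ->]]]] Hs.
exists (fun j => (1 - s) * wa j + s * wb j); split.
  by move=> j; have := Ha1 j; have := Hb1 j; nra.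
split.
  move=> j Hj; case: (Req_EM_T (wa j) 0) => Ea; last exact: Ha2.
  by apply: Hb2 => Eb; apply: Hj; rewrite Ea Eb; ring.
split.
  rewrite sumD (sumZ _ (1 - s)) (sumZ _ s) Ha3 Hb3; ring.
rewrite /lincomb; apply: functional_extensionality => i.
rewrite -!sumZ -sumD; apply: sum_ext => j; ring.
Qed.


Lemma filter_len_lt (A : Type) (p p' : A -> bool) (s : list A) :
  (forall h, List.In h s -> p' h = true -> p h = true) ->
  (exists h, List.In h s /\ p h = true /\ p' h = false) ->
  (length (List.filter p' s) < length (List.filter p s))%nat.
Proof.
have le : forall s : list A, (forall h, List.In h s -> p' h = true -> p h = true) ->
    (length (List.filter p' s) <= length (List.filter p s))%nat.
  elim=> [|a t IH] //= H.
  have IH' := IH (fun h hi => H h (or_intror hi)).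
  case E': (p' a); first by rewrite (H a (or_introl erefl) E') /=.
  case: (p a) => //=; exact: leqW.
elim: s => [|a t IH] H [h [hi [ph ph']]] //=.
case: hi => [E|hi].
  subst h; rewrite ph ph' /=; apply: le => h hi; exact: H h (or_intror hi).
have IH' := IH (fun h hi => H h (or_intror hi)) (ex_intro _ h (conj hi (conj ph ph'))).
case E': (p' a); first by rewrite (H a (or_introl erefl) E').
by case: (p a) => //=; apply: leqW.
Qed.

Definition inact n (H : seq (vec n * R)) x := length (List.filter (fun h => negb (activeb x h)) H).

Lemma exit_dir n (H : seq (vec n * R)) c rho x d :
  (forall y, polyH H y -> forall i, Rabs (y i - c i) <= rho) ->
  polyH H x -> d <> v0 n -> exists h, List.In h H /\ 0 < dot h.1 d.
Proof.
move=> Hb Px Hd; apply: NNPP => Hn.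
have Hall : forall t, 0 <= t -> polyH H (fun i => x i + t * d i).
  move=> t Ht h hH; rewrite dot_addsc.
  have : dot h.1 d <= 0 by apply: Rnot_lt_le => hp; apply: Hn; exists h.
  have := Px h hH; nra.
have [i Hi] : exists i, d i <> 0.
  apply: NNPP => H0; apply: Hd; apply: functional_extensionality => i.
  by apply: NNPP => hi; apply: H0; exists i.
have rho0 : 0 <= rho by have := Hb x Px i; have := Rabs_pos (x i - c i); lra.
have dpos : 0 < Rabs (d i) by apply: Rabs_pos_lt.
set t := (2 * rho + 1) / Rabs (d i).
have t0 : 0 <= t by rewrite /t; apply: Rle_mult_inv_pos; [lra|exact: dpos].
have := Hb _ (Hall t t0) i; have := Hb x Px i => h1 h2.
have e : Rabs (t * d i) = 2 * rho + 1.
  rewrite Rabs_mult Rabs_pos_eq // /t; field; lra.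
have tri := Rabs_triang (x i + t * d i - c i) (- (x i - c i)).
rewrite Rabs_Ropp in tri.
have e2 : x i + t * d i - c i + - (x i - c i) = t * d i by ring.
rewrite e2 in tri. lra.
Qed.

Lemma move_dir n (H : seq (vec n * R)) x d :
  polyH H x -> (forall h, List.In h H -> dot h.1 x = h.2 -> dot h.1 d = 0) ->
  (exists h, List.In h H /\ 0 < dot h.1 d) ->
  exists t, 0 < t /\ polyH H (fun i => x i + t * d i) /\
    (inact H (fun i => (x i + t * d i)%R) < inact H x)%nat.
Proof.
move=> Px Ha [h0 [h0H h0p]].
pose ratio (h : vec n * R) := (h.2 - dot h.1 x) / dot h.1 d.
pose Hp := List.filter (fun h => if Rlt_dec 0 (dot h.1 d) then true else false) H.
have inHp : forall h, List.In h Hp <-> List.In h H /\ 0 < dot h.1 d.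
  by move=> h; rewrite List.filter_In; case: Rlt_dec => //; split => -[].
have rpos : forall h, List.In h Hp -> 0 < ratio h.
  move=> h /inHp [hH hp]; rewrite /ratio.
  have : dot h.1 x < h.2.
    case: (Px h hH) => // e; move: (Ha h hH e); lra.
  move=> hl; apply: Rdiv_lt_0_compat => //; lra.
set t := minl (ratio h0) (List.map ratio Hp).
have h0Hp : List.In h0 Hp by apply/inHp.
have [hs [hsHp ths]] : exists hs, List.In hs Hp /\ t = ratio hs.
  case: (minl_in (ratio h0) (List.map ratio Hp)) => E; rewrite -/t in E.
    by exists h0.
  by move: E; rewrite List.in_map_iff => -[hs [E1 E2]]; exists hs.
have tle : forall h, List.In h Hp -> t <= ratio h.
  by move=> h hh; case: (minl_le (ratio h0) (List.map ratio Hp)) => _; apply; apply: List.in_map.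
have t0 : 0 < t by rewrite ths; exact: rpos.
exists t; split => //; split.
  move=> h hH; rewrite dot_addsc.
  case: (Rlt_le_dec 0 (dot h.1 d)) => hd.
    have := tle h (proj2 (inHp h) (conj hH hd)); rewrite /ratio => hr.
    have : t * dot h.1 d <= (h.2 - dot h.1 x) / dot h.1 d * dot h.1 d by nra.
    have -> : (h.2 - dot h.1 x) / dot h.1 d * dot h.1 d = h.2 - dot h.1 x by field; lra.
    lra.
  have := Px h hH; nra.
case/inHp: (hsHp) => hsH hsp.
apply: filter_len_lt.
  move=> h hH /=; case E: (activeb x h) => //=; move/activebP: E => ha.
  have -> // : activeb (fun i => x i + t * d i) h = true.
  by apply/activebP; rewrite dot_addsc ha (Ha h hH ha); ring.
exists hs; split => //=; split.
  case E: (activeb x hs) => //=; move/activebP: E => ha; move: (Ha hs hsH ha); lra.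
have -> // : activeb (fun i => x i + t * d i) hs = true.
apply/activebP; rewrite dot_addsc ths /ratio; field; lra.
Qed.

Lemma KM n (H : seq (vec n * R)) (G : list (vec n)) :
  (exists c rho, forall y, polyH H y -> forall i, Rabs (y i - c i) <= rho) ->
  (forall x, basic H x -> List.In x G) ->
  forall x, polyH H x -> inconvP G (polyH H) x.
Proof.
move=> [c [rho Hb]] HG x.
move: {2}(inact H x) (leqnn (inact H x)) => k; elim: k x => [|k IH] x Hk Px.
all: case: (classic (basic H x)) => Bx; first by apply: inconvP_pt => //; apply: HG.
all: have [d [Hd Hdn]] : exists d, (forall h, List.In h H -> dot h.1 x = h.2 -> dot h.1 d = 0) /\ d <> v0 n
      by apply: NNPP => hn; apply: Bx; split => // d hd; apply: NNPP => dn; apply: hn; exists d.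
all: have Hdm : forall h, List.In h H -> dot h.1 x = h.2 -> dot h.1 (fun i => - d i) = 0
      by move=> h hH ha; rewrite (_ : (fun i => - d i) = (fun i => 0 * d i + (-1) * d i));
         [rewrite dot_linr (Hd h hH ha); ring | apply: functional_extensionality => i; ring].
all: have Hdmn : (fun i => - d i) <> v0 n
      by move=> e; apply: Hdn; apply: functional_extensionality => i;
         have := f_equal (fun f => f i) e; rewrite /v0 /=; lra.
all: have [t1 [t1p [P1 L1]]] := move_dir Px Hd (exit_dir Hb Px Hdn).
all: have [t2 [t2p [P2 L2]]] := move_dir Px Hdm (exit_dir Hb Px Hdmn).
- by exfalso; move: L1; rewrite (_ : inact H x = 0)%nat //; apply/eqP; rewrite -leqn0.
- have I1 := IH _ (leq_trans (leq_trans L1 Hk) (leqnn _) : (_ <= k)%nat) P1.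
  have I2 := IH _ (leq_trans (leq_trans L2 Hk) (leqnn _) : (_ <= k)%nat) P2.
  have := inconvP_comb I1 I2 (s := t1 / (t1 + t2)) _.
  rewrite (_ : (fun i => (1 - t1 / (t1 + t2)) * (x i + t1 * d i) + t1 / (t1 + t2) * (x i + t2 * - d i)) = x).
    apply; split; [apply: Rle_mult_inv_pos; lra|].
    apply: (Rmult_le_reg_r (t1 + t2)); first lra.
    rewrite /Rdiv Rmult_assoc Rinv_l; lra.
  apply: functional_extensionality => i; field; lra.
Qed.


Lemma sum_recr N (f : nat -> R) :
  \big[Rplus/0]_(j < N.+1) f j = \big[Rplus/0]_(j < N) f j + f N.
Proof. by rewrite big_ord_recr. Qed.

Lemma sum0 N : \big[Rplus/0]_(j < N) (0 : R) = 0.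
Proof. by rewrite big1. Qed.

Lemma wsum_pos N (mu c : nat -> R) :
  (forall j, 0 <= mu j) -> \big[Rplus/0]_(j < N) mu j = 1 ->
  (forall j, (j < N)%nat -> mu j <> 0 -> 0 < c j) ->
  0 < \big[Rplus/0]_(j < N) (mu j * c j).
Proof.
move=> H0 H1 Hc.
have [j Hj] : exists j : 'I_N, 0 < mu j.
  apply: NNPP => hn.
  have : \big[Rplus/0]_(j < N) mu j <= \big[Rplus/0]_(j < N) (0 : R).
    apply: sum_le => j; apply: Rnot_lt_le => h; apply: hn; by exists j.
  rewrite sum0; lra.
have Hnn : forall j : 'I_N, 0 <= mu j * c j.
  move=> k; case: (Req_EM_T (mu k) 0) => [->|hk]; first lra.
  have := Hc k (ltn_ord k) hk; have := H0 k; nra.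
have := @sum_term_le _ (fun k : 'I_N => mu k * c k) j Hnn.
have := Hc j (ltn_ord j) (Rgt_not_eq _ _ Hj) => h2 /= h1; nra.
Qed.

Definition selb (sel : nat -> Prop) j : bool := if excluded_middle_informative (sel j) then true else false.

Lemma gordan n N (g : nat -> vec n) (sel : nat -> Prop) :
  (exists v : vec n, forall j, (j < N)%nat -> sel j -> dot v (g j) < 0) \/
  (exists mu : nat -> R, (forall j, 0 <= mu j) /\ (forall j, mu j <> 0 -> sel j /\ (j < N)%nat) /\
     \big[Rplus/0]_(j < N) mu j = 1 /\ forall i, \big[Rplus/0]_(j < N) (mu j * g j i) = 0).
Proof.
elim: N g sel => [|N IH] g sel.
  by left; exists (v0 n) => j.
case: (classic (exists j, (j < N)%nat /\ sel j)) => [[j0 [j0N j0s]]|nosel]; last first.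
  case: (classic (sel N)) => sN; last first.
    left; exists (v0 n) => j; rewrite ltnS leq_eqVlt => /orP [/eqP ->|jN] // sj.
    by exfalso; apply: nosel; exists j.
  case: (classic (g N = v0 n)) => gN.
    right; exists (fun j => if j == N then 1 else 0); split; first by move=> j; case: eqP; lra.
    split; first by move=> j; case: eqP => // -> _; split.
    split; first by apply: sum_indicator.
    move=> i; rewrite big_ord_recr /= eqxx big1 ?gN /v0; first ring.
    by move=> j _; rewrite (ltn_eqF (ltn_ord j)); ring.
  left; exists (fun i => - g N i) => j; rewrite ltnS leq_eqVlt => /orP [/eqP ->|jN] sj; last first.
    by exfalso; apply: nosel; exists j.
  have e : dot (fun i => - g N i) (g N) = - dot (g N) (g N).
    rewrite (_ : (fun i => - g N i) = (fun i => (-1) * g N i + 0 * g N i)); last first.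
      by apply: functional_extensionality => i; ring.
    rewrite dot_lin; ring.
  rewrite e; have := dot_ge0 (g N); case => h; first lra.
  by exfalso; apply: gN; apply: dot_eq0.
case: (IH g sel) => [[v' Hv']|[mu [M1 [M2 [M3 M4]]]]]; last first.
  right; exists mu; split => //; split.
    by move=> j /M2 [sj jN]; split => //; apply: ltnW.
  have muN : mu N = 0 by apply: NNPP => /M2 [_]; rewrite ltnn.
  split; first by rewrite big_ord_recr /= muN M3; ring.
  by move=> i; rewrite big_ord_recr /= muN M4; ring.
case: (classic (sel N)) => sN; last first.
  left; exists v' => j; rewrite ltnS leq_eqVlt => /orP [/eqP ->|jN] sj //; exact: Hv'.
case: (Rlt_le_dec (dot v' (g N)) 0) => ha.
  left; exists v' => j; rewrite ltnS leq_eqVlt => /orP [/eqP ->|jN] sj //; exact: Hv'.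
set a := g N in ha *; set al := dot v' a in ha *.
pose b j : vec n := fun i => al * g j i + (- dot v' (g j)) * a i.
case: (IH b sel) => [[w Hw]|[mu [M1 [M2 [M3 M4]]]]].
-
  have Hwb : forall j, (j < N)%nat -> sel j -> al * dot w (g j) - dot v' (g j) * dot w a < 0.
    move=> j jN sj; have := Hw j jN sj; rewrite /b dot_linr; lra.
  pose ratio j := dot w (g j) / (- dot v' (g j)).
  pose Js := List.filter (selb sel) (List.seq 0 N).
  have inJs : forall j, List.In j Js <-> (j < N)%nat /\ sel j.
    move=> j; rewrite List.filter_In List.in_seq /selb; case: excluded_middle_informative => s;
    split; move=> [h1 h2]; split => //; try (by apply/ltP; lia); try (by move/ltP: h1; lia).
  set S0 := maxl (ratio j0) (List.map ratio Js).
  have [js [jsN [jss ES]]] : exists js, (js < N)%nat /\ sel js /\ S0 = ratio js.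
    case: (maxl_in (ratio j0) (List.map ratio Js)) => E; rewrite -/S0 in E; first by exists j0.
    by move: E; rewrite List.in_map_iff => -[js [E1 /inJs [h1 h2]]]; exists js.
  have S0ge : forall j, (j < N)%nat -> sel j -> ratio j <= S0.
    move=> j jN sj; case: (maxl_ge (ratio j0) (List.map ratio Js)) => _; apply.
    by apply: List.in_map; apply/inJs.
  have bneg : forall j, (j < N)%nat -> sel j -> dot v' (g j) < 0 by move=> j; apply: Hv'.
  have key : al * S0 < - dot w a.
    have := Hwb js jsN jss; have := bneg js jsN jss; rewrite ES /ratio => h1 h2.
    set bj := dot v' (g js) in h1 h2 *.
    apply: (Rmult_lt_reg_r (- bj)); first lra.
    have -> : al * (dot w (g js) / - bj) * - bj = al * dot w (g js) by field; lra.
    nra.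
  set del := (- dot w a - al * S0) / (al + 1).
  have delp : 0 < del by apply: Rdiv_lt_0_compat; lra.
  have aldel : al * del < - dot w a - al * S0.
    rewrite /del; apply: (Rmult_lt_reg_r (al + 1)); first lra.
    have -> : al * ((- dot w a - al * S0) / (al + 1)) * (al + 1) = al * (- dot w a - al * S0) by field; lra.
    nra.
  left; exists (fun i => 1 * w i + (S0 + del) * v' i) => j.
  rewrite ltnS leq_eqVlt => /orP [/eqP ->|jN] sj; rewrite dot_lin.
    rewrite -/a -/al; nra.
  have := S0ge j jN sj; have := bneg j jN sj; rewrite /ratio => h1 h2.
  have : dot w (g j) / - dot v' (g j) * (- dot v' (g j)) < (S0 + del) * (- dot v' (g j)) by nra.
  have -> : dot w (g j) / - dot v' (g j) * (- dot v' (g j)) = dot w (g j) by field; lra.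
  lra.
-
  set S := \big[Rplus/0]_(j < N) (mu j * (- dot v' (g j))).
  have Spos : 0 < S.
    apply: (@wsum_pos N mu (fun j => - dot v' (g j))) => // j jN /M2 [sj _]; have := Hv' j jN sj; lra.
  set T := al + S.
  have Tpos : 0 < T by rewrite /T; lra.
  right; exists (fun j => if j == N then S / T else al * mu j / T); split.
    move=> j; case: eqP => _; [apply: Rle_mult_inv_pos; lra|].
    apply: Rle_mult_inv_pos => //; have := M1 j; nra.
  split.
    move=> j; case: eqP => [->|jN] h; first by split.
    have : mu j <> 0 by move=> e; apply: h; rewrite e; field; lra.
    by move/M2 => [sj jlt]; split => //; apply: ltnW.
  split.
    rewrite big_ord_recr /= eqxx.
    rewrite (eq_bigr (fun j : 'I_N => (al / T) * mu j)); last first.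
      by move=> j _; rewrite (ltn_eqF (ltn_ord j)); field; lra.
    rewrite sumZ M3; rewrite /T; field; lra.
  move=> i; rewrite big_ord_recr /= eqxx.
  have h := M4 i; rewrite /b in h.
  rewrite (eq_bigr (fun j : 'I_N => al * (mu j * g j i) + (mu j * - dot v' (g j)) * a i)) in h; last first.
    by move=> j _; ring.
  rewrite sumD sumZ in h.
  rewrite (_ : \big[Rplus/0]_(j < N) (mu j * - dot v' (g j) * a i) = S * a i) in h; last first.
    by rewrite /S big_distrl.
  rewrite (eq_bigr (fun j : 'I_N => (al / T) * (mu j * g j i))); last first.
    by move=> j _; rewrite (ltn_eqF (ltn_ord j)); field; lra.
  rewrite sumZ -/a.
  have -> : al / T * \big[Rplus/0]_(j < N) (mu j * g j i) + S / T * a i =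
    (al * \big[Rplus/0]_(j < N) (mu j * g j i) + S * a i) / T by field; lra.
  rewrite h; field; lra.
Qed.


Lemma basic_vertex n (H : seq (vec n * R)) (P : vec n -> Prop) c :
  (forall x, P x <-> polyH H x) -> basic H c -> vertex P c.
Proof.
move=> HP [Pc Bc]; split; first by apply/HP.
move=> a b t /HP Pa /HP Pb Ht Ec.
have act : forall h, List.In h H -> dot h.1 c = h.2 -> dot h.1 a = h.2 /\ dot h.1 b = h.2.
  move=> h hH hc.
  have e : dot h.1 c = (1 - t) * dot h.1 a + t * dot h.1 b.
    by rewrite Ec /vadd /vscale dot_linr.
  have := Pa h hH; have := Pb h hH; move=> h1 h2; split; nra.
have eq0 : forall y, polyH H y -> (forall h, List.In h H -> dot h.1 c = h.2 -> dot h.1 y = h.2) -> y = c.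
  move=> y Py hy.
  have := Bc (fun i => y i - c i).
  move=> /(_ (fun h hH hc => ltac:(rewrite dot_sub (hy h hH hc) hc; ring))) e.
  apply: functional_extensionality => i; have := f_equal (fun f => f i) e; rewrite /v0 /=; lra.
split; apply: eq0 => // h hH hc; by case: (act h hH hc).
Qed.

Lemma inconvP_mono n (G : list (vec n)) (Q Q' : vec n -> Prop) x :
  (forall y, Q y -> Q' y) -> inconvP G Q x -> inconvP G Q' x.
Proof. move=> HQ [w [h1 [h2 [h3 h4]]]]; exists w; split => //; split => // j /h2; exact: HQ. Qed.

Lemma sum_nz N (w : nat -> R) : \big[Rplus/0]_(j < N) w j = 1 -> exists j, (j < N)%nat /\ w j <> 0.
Proof.
move=> h; apply: NNPP => hn.
have : \big[Rplus/0]_(j < N) w j = \big[Rplus/0]_(j < N) (0:R).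
  apply: sum_ext => j; apply: NNPP => hj; apply: hn; exists j; split => //.
rewrite sum0; lra.
Qed.

Lemma forward (M : finType) (n : nat) (Rset : M -> vec n -> Prop) (x0 : vec n) (gamma : R) :
  (exists P : vec n -> Prop,
      convex_polytope P /\ H_closed Rset P /\ P x0 /\
      (forall y, P y -> norm (vsub y x0) <= gamma)) ->
  (forall v : vec n, exists m : M, forall r, Rset m r -> dot v r >= 0).
Proof.
move=> [P [[H HP] [HC [Px0 Hb]]]] v.
have bnd : exists c rho, forall y, polyH H y -> forall i, Rabs (y i - c i) <= rho.
  exists x0, gamma => y /HP Py i; have := coord_le_norm (vsub y x0) i => h.
  change (Rabs (vsub y x0 i) <= gamma); have := Hb y Py; lra.
have [V [HV1 HV2]] := basic_list H.
have KMx := KM bnd HV1.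
have [w [w1 [w2 [w3 w4]]]] := KMx x0 (proj1 (HP x0) Px0).
have [j0 [j0N _]] := sum_nz w3.
pose y0 := List.nth j0 V (v0 n).
have y0V : List.In y0 V by apply: List.nth_In; apply/ltP.
set m0 := minl (dot v y0) (List.map (dot v) V).
have [c [cV Ec]] : exists c, List.In c V /\ m0 = dot v c.
  case: (minl_in (dot v y0) (List.map (dot v) V)) => E; rewrite -/m0 in E; first by exists y0.
  by move: E; rewrite List.in_map_iff => -[c [E1 E2]]; exists c.
have cmin : forall y, List.In y V -> dot v c <= dot v y.
  by move=> y yV; rewrite -Ec; case: (minl_le (dot v y0) (List.map (dot v) V)) => _; apply; apply: List.in_map.
have cminP : forall x, P x -> dot v c <= dot v x.
  move=> x /HP Px; have [u [u1 [u2 [u3 u4]]]] := KMx x Px.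
  rewrite u4 /lincomb (@dot_sum _ (length V) v u (fun j => List.nth j V (v0 n))).
  have -> : dot v c = \big[Rplus/0]_(j < length V) (u j * dot v c).
    by rewrite -big_distrl /= u3; ring.
  apply: sum_le => j; apply: Rmult_le_compat_l => //; apply: cmin; apply: List.nth_In; apply/ltP; exact: ltn_ord.
have [m [tau [tau0 Ht]]] := HC c (basic_vertex HP (HV2 c cV)).
exists m => r Rr.
have := cminP _ (Ht r tau Rr (conj (Rlt_le _ _ tau0) (Rle_refl _))).
rewrite /vadd /vscale dot_addsc => h.
apply: Rle_ge; apply: (Rmult_le_reg_l tau) => //; lra.
Qed.


Lemma seq_In (T : eqType) (x : T) (s : seq T) : x \in s -> List.In x s.
Proof.
elim: s => [|a t IH] //=; rewrite in_cons => /orP [/eqP ->|h]; [by left | by right; apply: IH].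
Qed.

Definition zpt n (x0 : vec n) (k : R) (G : list (vec n)) (l : nat -> R) : vec n :=
  fun i => x0 i + k * lincomb G l i.

Definition Zset n (x0 : vec n) (k : R) (G : list (vec n)) (x : vec n) : Prop :=
  exists l : nat -> R, (forall j, (j < length G)%nat -> -1 <= l j <= 1) /\ x = zpt x0 k G l.

Lemma dot_opp n (a x : vec n) : dot (fun k => - a k) x = - dot a x.
Proof.
have := dot_lin (-1) 0 a a x.
rewrite (_ : (fun i => -1 * a i + 0 * a i) = (fun k => - a k)); last first.
  by apply: functional_extensionality => i; ring.
by move=> ->; ring.
Qed.

Lemma lincomb_lin n (G : list (vec n)) a b s i :
  lincomb G (fun j => a j + s * b j) i = lincomb G a i + s * lincomb G b i.
Proof.
rewrite /lincomb -sumZ -sumD; apply: sum_ext => j; ring.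
Qed.

Lemma lincomb_ind n (G : list (vec n)) j i : (j < length G)%nat ->
  lincomb G (fun j' => if j' == j then 1 else 0) i = List.nth j G (v0 n) i.
Proof.
move=> Hj; rewrite /lincomb -(sum_indicator (List.nth j G (v0 n) i) Hj).
by apply: sum_ext => k; case: eqP => [->|_]; ring.
Qed.

Section Sys.
Variables (n : nat) (x0 : vec n) (k : R) (G : list (vec n)).
Let N := length G.
Let g j := List.nth j G (v0 n).

Definition C1 (i : 'I_n) := Cstr (fun q => if q == i then 1 else 0) (fun j => - k * g j i) (x0 i).
Definition C2 (i : 'I_n) := Cstr (fun q => - (if q == i then 1 else 0)) (fun j => k * g j i) (- x0 i).
Definition C3 (j : nat) := Cstr (v0 n) (fun j' => if j' == j then 1 else 0) 1.
Definition C4 (j : nat) := Cstr (v0 n) (fun j' => - (if j' == j then 1 else 0)) 1.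

Definition Csys := List.map C1 (enum 'I_n) ++ List.map C2 (enum 'I_n) ++
                   List.map C3 (List.seq 0 N) ++ List.map C4 (List.seq 0 N).

Lemma lhs_C1 i x l : lhs N (C1 i) x l = x i - k * lincomb G l i.
Proof.
rewrite /lhs /= dot_unit /lincomb -/N; rewrite (_ : forall a b, a - k * b = a + (-k) * b); last by move=> *; ring.
by rewrite -sumZ; congr (_ + _); apply: sum_ext => j; rewrite /g; ring.
Qed.

Lemma lhs_C2 i x l : lhs N (C2 i) x l = - x i + k * lincomb G l i.
Proof.
rewrite /lhs /= dot_opp dot_unit /lincomb -/N -sumZ.
by congr (_ + _); apply: sum_ext => j; rewrite /g; ring.
Qed.

Lemma lhs_C3 j x l : (j < N)%nat -> lhs N (C3 j) x l = l j.
Proof.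
move=> Hj; rewrite /lhs /= dot0 Rplus_0_l -(sum_indicator (l j) Hj).
by apply: sum_ext => q; case: eqP => [->|_]; ring.
Qed.

Lemma lhs_C4 j x l : (j < N)%nat -> lhs N (C4 j) x l = - l j.
Proof.
move=> Hj; rewrite /lhs /= dot0 Rplus_0_l -(sum_indicator (- l j) Hj).
by apply: sum_ext => q; case: eqP => [->|_]; ring.
Qed.

Lemma sat_Csys x l : sat N Csys x l <-> (forall j, (j < N)%nat -> -1 <= l j <= 1) /\ x = zpt x0 k G l.
Proof.
have inseq : forall j, List.In j (List.seq 0 N) <-> (j < N)%nat.
  by move=> j; rewrite List.in_seq; split => [h|/ltP h]; [apply/ltP; lia | lia].
have inen : forall i : 'I_n, List.In i (enum 'I_n) by move=> i; apply: seq_In; rewrite mem_enum.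
split.
- move=> H; split.
    move=> j Hj.
    have i4 : List.In (C4 j) Csys.
      by rewrite !List.in_app_iff; right; right; right; apply: List.in_map; apply/inseq.
    have i3 : List.In (C3 j) Csys.
      by rewrite !List.in_app_iff; right; right; left; apply: List.in_map; apply/inseq.
    have := H _ i4; have := H _ i3; rewrite lhs_C3 // lhs_C4 //= => h1 h2; lra.
  apply: functional_extensionality => i; rewrite /zpt.
  have h1 := H (C1 i); rewrite lhs_C1 /= in h1.
  have h2 := H (C2 i); rewrite lhs_C2 /= in h2.
  have := h1 (ltac:(rewrite !List.in_app_iff; left; apply: List.in_map; apply: inen)).
  have := h2 (ltac:(rewrite !List.in_app_iff; right; left; apply: List.in_map; apply: inen)).
  lra.
- move=> [Hl Hx] s; rewrite !List.in_app_iff !List.in_map_iff.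
  case=> [[i [<- _]]|[[i [<- _]]|[[j [<- /inseq Hj]]|[j [<- /inseq Hj]]]]].
  + by rewrite lhs_C1 Hx /zpt /=; lra.
  + by rewrite lhs_C2 Hx /zpt /=; lra.
  + by rewrite lhs_C3 //=; case: (Hl j Hj).
  + by rewrite lhs_C4 //=; case: (Hl j Hj) => h1 h2; lra.
Qed.

Lemma Z_polytope : convex_polytope (Zset x0 k G).
Proof.
exists (List.map (fun s => (ca s, cb s)) (FMall N Csys)) => x.
have e1 : Zset x0 k G x <-> exists l, sat N Csys x l.
  split; first by move=> [l [h1 h2]]; exists l; apply/sat_Csys.
  by move=> [l /sat_Csys [h1 h2]]; exists l.
rewrite e1 FMall_correct; split.
  move=> H h; rewrite List.in_map_iff => -[s [<- hs]]; exact: H.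
move=> H s hs; exact: (H (ca s, cb s) (List.in_map _ _ _ hs)).
Qed.

End Sys.


Lemma norm_le_l1 n (y : vec n) : norm y <= \big[Rplus/0]_(i < n) Rabs (y i).
Proof.
have [h1 h2] : 0 <= \big[Rplus/0]_(i < n) Rabs (y i) /\
               dot y y <= \big[Rplus/0]_(i < n) Rabs (y i) * \big[Rplus/0]_(i < n) Rabs (y i).
  rewrite /dot; apply: (big_ind2 (fun a b => 0 <= b /\ a <= b * b)).
  - lra.
  - move=> a1 a2 b1 b2 [h1 h2] [h3 h4]; split; nra.
  - move=> i _; split; first exact: Rabs_pos.
    by rewrite -Rabs_mult Rabs_pos_eq; [lra | nra].
rewrite /norm -(sqrt_square (\big[Rplus/0]_(i < n) Rabs (y i))) //.
by apply: sqrt_le_1_alt.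
Qed.

Lemma Z_norm n (x0 : vec n) k (G : list (vec n)) y :
  0 <= k -> Zset x0 k G y ->
  norm (vsub y x0) <= k * \big[Rplus/0]_(j < length G) \big[Rplus/0]_(i < n) Rabs (List.nth j G (v0 n) i).
Proof.
move=> k0 [l [Hl ->]].
apply: Rle_trans (norm_le_l1 _) _.
rewrite exchange_big /= -sumZ; apply: sum_le => i.
rewrite /vsub /zpt (_ : x0 i + k * lincomb G l i - x0 i = k * lincomb G l i); last ring.
rewrite Rabs_mult Rabs_pos_eq //; apply: Rmult_le_compat_l => //.
rewrite /lincomb; apply: (big_ind2 (fun a b => Rabs a <= b)).
- by rewrite Rabs_R0; lra.
- move=> a1 a2 b1 b2 h1 h2; apply: Rle_trans (Rabs_triang _ _) _; lra.
- move=> j _; rewrite Rabs_mult; have := Hl j (ltn_ord j) => hj.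
  have : Rabs (l j) <= 1 by apply: Rabs_le; lra.
  have := Rabs_pos (List.nth j G (v0 n) i); have := Rabs_pos (l j); nra.
Qed.

Lemma Z_closed (M : finType) n (Rset : M -> vec n -> Prop) x0 k (G : list (vec n)) :
  0 < k ->
  (forall v : vec n, exists m : M, forall r, Rset m r -> dot v r >= 0) ->
  (forall m r, Rset m r -> inconvP G (Rset m) r) ->
  H_closed Rset (Zset x0 k G).
Proof.
move=> k0 Hyp Hconv c [[l0 [Hl0 Ec]] Vc].
set N := length G.
pose g j := List.nth j G (v0 n).
pose isz j : bool := if excluded_middle_informative (g j = v0 n) then true else false.
pose l j := if isz j then -1 else l0 j.
have Hl : forall j, (j < N)%nat -> -1 <= l j <= 1.
  by move=> j Hj; rewrite /l; case: (isz j); [lra | apply: Hl0].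
have lz : forall j, g j = v0 n -> l j = -1.
  by move=> j gj; rewrite /l /isz; case: excluded_middle_informative.
have Ec' : c = zpt x0 k G l.
  rewrite Ec /zpt; apply: functional_extensionality => i; congr (_ + k * _).
  rewrite /lincomb; apply: sum_ext => j; rewrite /l /isz.
  case: excluded_middle_informative => // gj.
  by rewrite (f_equal (fun f => f i) gj : List.nth j G (v0 n) i = 0); ring.
have rep : forall l2, (forall j, (j < N)%nat -> -1 <= l2 j <= 1) -> c = zpt x0 k G l2 ->
    forall j, (j < N)%nat -> g j <> v0 n -> l2 j = 1 \/ l2 j = -1.
  move=> l2 Hl2 E2 j Hj gj; apply: NNPP => hn.
  have [h1 h2] : -1 < l2 j /\ l2 j < 1.
    have := Hl2 j Hj; case=> h1 h2; split.
      by case: h1 => // e; exfalso; apply: hn; right.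
    by case: h2 => // e; exfalso; apply: hn; left.
  set s := Rmin (1 - l2 j) (l2 j + 1).
  have s0 : 0 < s by rewrite /s; apply: Rmin_glb_lt; lra.
  have s1 : s <= 1 - l2 j by apply: Rmin_l.
  have s2 : s <= l2 j + 1 by apply: Rmin_r.
  pose ind j' : R := if j' == j then 1 else 0.
  pose la j' := l2 j' + s * ind j'.
  pose lb j' := l2 j' + (- s) * ind j'.
  have Pa : Zset x0 k G (zpt x0 k G la).
    exists la; split => // j' Hj'; rewrite /la /ind; case: eqP => [->|_]; [lra|].
    by have := Hl2 j' Hj'; lra.
  have Pb : Zset x0 k G (zpt x0 k G lb).
    exists lb; split => // j' Hj'; rewrite /lb /ind; case: eqP => [->|_]; [lra|].
    by have := Hl2 j' Hj'; lra.
  have za : forall i, zpt x0 k G la i = c i + k * s * g j i.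
    by move=> i; rewrite E2 /zpt /la lincomb_lin lincomb_ind // /g; ring.
  have zb : forall i, zpt x0 k G lb i = c i - k * s * g j i.
    by move=> i; rewrite E2 /zpt /lb lincomb_lin lincomb_ind // /g; ring.
  have := Vc _ _ (1/2) Pa Pb (ltac:(lra)).
  move=> /(_ _) [].
    apply: functional_extensionality => i; rewrite /vadd /vscale za zb; field.
  move=> ea _; apply: gj; apply: functional_extensionality => i.
  have := f_equal (fun f => f i) ea; rewrite /= za /v0 => h.
  have : k * s * g j i = 0 by lra.
  move=> /Rmult_integral [/Rmult_integral [|]|] //; lra.
case: (gordan N g (fun j => g j <> v0 n /\ l j = 1)) => [[v Hv]|[mu [M1 [M2 [M3 M4]]]]].
- have [m Hm] := Hyp v.
  have Hm' : forall j, (j < N)%nat -> Rset m (g j) -> l j = -1.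
    move=> j Hj Rj; case: (classic (g j = v0 n)) => gj; first exact: lz.
    case: (rep l Hl Ec' j Hj gj) => // e.
    by have := Hv j Hj (conj gj e); have := Hm _ Rj; lra.
  exists m, k; split => // r t Rr Ht.
  have [w [w1 [w2 [w3 w4]]]] := Hconv m r Rr.
  exists (fun j => l j + (t / k) * w j); split.
    move=> j Hj; case: (Req_EM_T (w j) 0) => [->|wj].
      by rewrite Rmult_0_r Rplus_0_r; apply: Hl.
    rewrite (Hm' j Hj (w2 j wj)).
    have wle : w j <= 1.
      rewrite -w3; exact: (@sum_term_le _ (fun q : 'I_N => w q) (Ordinal Hj) (fun q => w1 q)).
    have tk : 0 <= t / k <= 1.
      split; first by apply: Rle_mult_inv_pos; lra.
      apply: (Rmult_le_reg_r k) => //; rewrite /Rdiv Rmult_assoc Rinv_l; lra.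
    have := w1 j; nra.
  apply: functional_extensionality => i.
  rewrite /vadd /vscale Ec' w4 /zpt lincomb_lin; field; lra.
- exfalso.
  have [j [jN mj]] := sum_nz M3.
  have [[gj lj] _] := M2 j mj.
  pose l3 q := l q + (-1) * mu q.
  have Hl3 : forall q, (q < N)%nat -> -1 <= l3 q <= 1.
    move=> q Hq; rewrite /l3; case: (Req_EM_T (mu q) 0) => [->|mq]; first by have := Hl q Hq; lra.
    have [[_ lq] _] := M2 q mq.
    have mle : mu q <= 1.
      rewrite -M3; exact: (@sum_term_le _ (fun q : 'I_N => mu q) (Ordinal Hq) (fun q => M1 q)).
    have := M1 q; rewrite lq; lra.
  have E3 : c = zpt x0 k G l3.
    rewrite Ec' /zpt; apply: functional_extensionality => i; rewrite /l3 lincomb_lin.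
    by rewrite /lincomb M4; ring.
  have := rep l3 Hl3 E3 j jN gj; rewrite /l3 lj.
  have := M1 j; have : mu j <= 1.
    rewrite -M3; exact: (@sum_term_le _ (fun q : 'I_N => mu q) (Ordinal jN) (fun q => M1 q)).
  move=> h1 h2; case=> h; [apply: mj|]; lra.
Qed.


Lemma backward (M : finType) (n : nat) (Rset : M -> vec n -> Prop) (x0 : vec n) (gamma : R) :
  BMS Rset -> 0 < gamma ->
  (forall v : vec n, exists m : M, forall r, Rset m r -> dot v r >= 0) ->
  (exists P : vec n -> Prop,
      convex_polytope P /\ H_closed Rset P /\ P x0 /\
      (forall y, P y -> norm (vsub y x0) <= gamma)).
Proof.
move=> [_ [_ HR]] g0 Hyp.
have step : forall m, exists HV : seq (vec n * R) * list (vec n),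
    (forall x, Rset m x <-> polyH HV.1 x) /\ (forall x, basic HV.1 x -> List.In x HV.2) /\
    (exists c rho, forall y, polyH HV.1 y -> forall i, Rabs (y i - c i) <= rho).
  move=> m; have [_ [[H HH] [rho Hrho]]] := HR m.
  have [V [V1 _]] := basic_list H.
  exists (H, V); split => //; split => //.
  exists (v0 n), rho => y /HH Py i; rewrite /v0 Rminus_0_r.
  by apply: Rle_trans (coord_le_norm y i) _; apply: Hrho.
pose F m := proj1_sig (constructive_indefinite_description _ (step m)).
have FP : forall m, (forall x, Rset m x <-> polyH (F m).1 x) /\ (forall x, basic (F m).1 x -> List.In x (F m).2) /\
    (exists c rho, forall y, polyH (F m).1 y -> forall i, Rabs (y i - c i) <= rho).
  by move=> m; rewrite /F; case: constructive_indefinite_description.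
set G := List.flat_map (fun m => (F m).2) (enum M).
have Hconv : forall m r, Rset m r -> inconvP G (Rset m) r.
  move=> m r Rr; have [F1 [F2 F3]] := FP m.
  have := @KM _ (F m).1 G F3.
  move=> /(_ _) KMm.
  apply: (inconvP_mono (Q := polyH (F m).1)); first by move=> y /F1.
  apply: KMm; last by apply/F1.
  move=> x /F2 hx; rewrite List.in_flat_map; exists m; split => //.
  by apply: seq_In; rewrite mem_enum.
set Sg := \big[Rplus/0]_(j < length G) \big[Rplus/0]_(i < n) Rabs (List.nth j G (v0 n) i).
have Sg0 : 0 <= Sg by apply: sum_ge0 => j; apply: sum_ge0 => i; apply: Rabs_pos.
set k := gamma / (1 + Sg).
have k0 : 0 < k by apply: Rdiv_lt_0_compat; lra.
exists (Zset x0 k G); split; first exact: Z_polytope.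
split; first exact: Z_closed.
split.
  exists (fun _ => 0); split; first by move=> j _; lra.
  apply: functional_extensionality => i; rewrite /zpt /lincomb big1 /=; first ring.
  by move=> j _; ring.
move=> y Py; apply: Rle_trans (Z_norm (Rlt_le _ _ k0) Py) _.
rewrite -/Sg /k.
apply: (Rmult_le_reg_r (1 + Sg)); first lra.
have -> : gamma / (1 + Sg) * Sg * (1 + Sg) = gamma * Sg by field; lra.
nra.
Qed.

Unset Implicit Arguments.

Theorem lemma1 (M : finType) (n : nat) (Rset : M -> vec n -> Prop)
  (x0 : vec n) (gamma : R) :
  BMS Rset -> 0 < gamma ->
  (exists P : vec n -> Prop,
      convex_polytope P /\ H_closed Rset P /\ P x0 /\
      (forall y, P y -> norm (vsub y x0) <= gamma))
  <->
  (forall v : vec n, exists m : M, forall r, Rset m r -> dot v r >= 0).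
Proof.
move=> HB g0; split; first exact: forward.
exact: backward.
Qed.
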